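(* For every $n\ge 3$, the sensitivity to synchronism of elementary cellular automaton rule $162$ satisfies $\mu(f_{162,n})=\dfrac{3^n-2^{n+1}-n+2}{3^n-2^{n+1}+2}$.
   Context: Cells are indexed by $\mathbb{Z}_n=\{0,\dots,n-1\}$, indices modulo $n$. Rule $162$ has local rule $r_{162}(x_1,x_2,x_3)=(x_1\vee\neg x_2)\wedge x_3$ and global function $f_{162,n}(x)_i=r_{162}(x_{i-1},x_i,x_{i+1})$. An update schedule is an ordered partition $\Delta=(\Delta_1,\dots,\Delta_k)$ of $\mathbb{Z}_n$ into nonempty blocks; $\mathcal{P}_n$ is the set of them. For a block $B$ let $f^{(B)}(x)_i=f_{162,n}(x)_i$ if $i\in B$ and $x_i$ otherwise; $f^{(\Delta)}_{162,n}=f^{(\Delta_k)}\circ\cdots\circ f^{(\Delta_1)}$. The dynamics of $\Delta$ is the transition digraph with arcs $(x,f^{(\Delta)}_{162,n}(x))$; $\mathcal{D}(f_{162,n})$ is the set of distinct dynamics over $\Delta\in\mathcal{P}_n$. The sensitivity to synchronism is $\mu(f_{162,n})=|\mathcal{D}(f_{162,n})|/(3^n-2^{n+1}+2)$. *)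

(* Defs.v *)
From mathcomp Require Import all_boot all_order all_algebra.
From mathcomp Require Import boolp.
Set Implicit Arguments. Unset Strict Implicit. Unset Printing Implicit Defensive.

Definition config (n : nat) := {ffun 'I_n -> bool}.

Definition r162 (x1 x2 x3 : bool) : bool := (x1 || ~~ x2) && x3.

Definition f162 (n : nat) (x : config n) : config n :=
  [ffun i : 'I_n => r162 (x (ord_pred i)) (x i) (x (ordS i))].

(* update schedules: ordered partitions of Z_n into nonempty blocks,
   represented as a duplicate-free sequence of blocks forming a partition *)
Definition update_schedule (n : nat) (D : seq {set 'I_n}) : bool :=
  uniq D && partition [set:: D] [set: 'I_n].

Definition block_update (n : nat) (B : {set 'I_n}) (x : config n) : config n :=
  [ffun i => if i \in B then f162 x i else x i].

Definition sched_update (n : nat) (D : seq {set 'I_n}) (x : config n) : config n :=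
  foldl (fun y B => block_update B y) x D.

Definition dynamics (n : nat) (D : seq {set 'I_n}) : {set config n * config n} :=
  [set (x, sched_update D x) | x : config n].

Definition dynamics_set (n : nat) : {set {set config n * config n}} :=
  [set G | `[< exists D : seq {set 'I_n}, update_schedule D /\ dynamics D = G >]].

Definition mu162 (n : nat) : rat :=
  (#|dynamics_set n|)%:R / ((3 ^ n)%:R - (2 ^ n.+1)%:R + 2)%R.

(* Main.v *)
Require Import Defs.
From mathcomp Require Import all_boot all_order all_algebra.
From mathcomp Require Import boolp zify lra.
Set Implicit Arguments. Unset Strict Implicit. Unset Printing Implicit Defensive.


Lemma ord_gt0 n (k : 'I_n) : 0 < n.
Proof. by apply: leq_ltn_trans (ltn_ord k). Qed.

Definition rot n (k : 'I_n) (t : nat) : 'I_n :=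
  Ordinal (ltn_pmod (k + t) (ord_gt0 k)).

Lemma rotE n (k : 'I_n) t : val (rot k t) = (k + t) %% n.
Proof. by []. Qed.

Lemma rot0 n (k : 'I_n) : rot k 0 = k.
Proof. by apply: val_inj; rewrite /= addn0 modn_small. Qed.

Lemma rotn n (k : 'I_n) : rot k n = k.
Proof. by apply: val_inj; rewrite /= modnDr modn_small. Qed.

Lemma ordS_rot n (k : 'I_n) t : ordS (rot k t) = rot k t.+1.
Proof. by apply: val_inj; rewrite /= -addn1 modnDml -addnA addn1. Qed.

Lemma ord_pred_rot n (k : 'I_n) t : ord_pred (rot k t.+1) = rot k t.
Proof. by rewrite -ordS_rot ordSK. Qed.

Lemma rot_rot n (k : 'I_n) t s : rot (rot k t) s = rot k (t + s).
Proof. by apply: val_inj; rewrite /= modnDml addnA. Qed.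

Lemma rot_eq n (k : 'I_n) t s : (rot k t == rot k s) = (t == s %[mod n]).
Proof. by rewrite -val_eqE /= eqn_modDl. Qed.

Lemma rot_neq n (k : 'I_n) t : 0 < t < n -> rot k t != k.
Proof.
move=> /andP[t0 tn]; rewrite -{2}(rot0 k) rot_eq mod0n modn_small //.
by rewrite -lt0n.
Qed.

Lemma rot_inj n (k : 'I_n) t s : t < n -> s < n -> rot k t = rot k s -> t = s.
Proof. by move=> tn sn /eqP; rewrite rot_eq !modn_small // => /eqP. Qed.

Lemma rot_surj n (k j : 'I_n) : j = rot k ((j + n - k) %% n).
Proof.
apply: val_inj => /=; rewrite modnDmr addnBA; last by apply: leq_trans (ltnW (ltn_ord k)) (leq_addl _ _).
by rewrite addKn modnDr modn_small.
Qed.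

Lemma rot_off n (k j : 'I_n) : exists2 t, t < n & j = rot k t.
Proof. exists ((j + n - k) %% n); [exact: ltn_pmod (ord_gt0 k) | exact: rot_surj]. Qed.

Lemma ordS_rot1 n (k : 'I_n) : ordS k = rot k 1.
Proof. by rewrite -{1}(rot0 k) ordS_rot. Qed.

Lemma ord_pred_rotn n (k : 'I_n) : ord_pred k = rot k n.-1.
Proof.
have := ord_pred_rot k n.-1; rewrite prednK ?(ord_gt0 k) // rotn //.
Qed.


Definition LT : 'I_3 := @Ordinal 3 0 isT.
Definition EQ : 'I_3 := @Ordinal 3 1 isT.
Definition GT : 'I_3 := @Ordinal 3 2 isT.

Lemma I3_cases (c : 'I_3) : [\/ c = LT, c = EQ | c = GT].
Proof.
case: c => [[|[|[|m]]] H].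
- by apply: Or31; apply: val_inj.
- by apply: Or32; apply: val_inj.
- by apply: Or33; apply: val_inj.
- by [].
Qed.

Definition Eb n (L : {ffun 'I_n -> 'I_3}) (x y : config n) : bool :=
  [forall k, y k == r162 (if L (ord_pred k) == LT then y (ord_pred k) else x (ord_pred k))
                         (x k) (if L k == GT then y (ordS k) else x (ordS k))].

Lemma EbP n (L : {ffun 'I_n -> 'I_3}) x y : Eb L x y -> forall k,
  y k = r162 (if L (ord_pred k) == LT then y (ord_pred k) else x (ord_pred k))
             (x k) (if L k == GT then y (ordS k) else x (ordS k)).
Proof. by move=> /forallP H k; apply/eqP. Qed.

Definition labr n (rho : 'I_n -> nat) : {ffun 'I_n -> 'I_3} :=
  [ffun k => if rho k < rho (ordS k) then LT else if rho k == rho (ordS k) then EQ else GT].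

Lemma labr_LT n (rho : 'I_n -> nat) k : (labr rho k == LT) = (rho k < rho (ordS k)).
Proof. by rewrite ffunE; case: ltngtP. Qed.

Lemma labr_GT n (rho : 'I_n -> nat) k : (labr rho k == GT) = (rho (ordS k) < rho k).
Proof. by rewrite ffunE; case: ltngtP. Qed.

Lemma labr_EQ n (rho : 'I_n -> nat) k : (labr rho k == EQ) = (rho (ordS k) == rho k).
Proof. by rewrite ffunE; case: ltngtP. Qed.

Lemma E_uniq n (rho : 'I_n -> nat) x y y' :
  Eb (labr rho) x y -> Eb (labr rho) x y' -> y = y'.
Proof.
move=> /EbP E1 /EbP E2.
suff H : forall m k, rho k < m -> y k = y' k.
  by apply/ffunP => k; apply: (H (rho k).+1).
elim=> // m IH k Hk.
have IH' : forall j, rho j < rho k -> y j = y' j.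
  by move=> j h; apply: IH; apply: leq_trans h _.
rewrite E1 E2 labr_LT labr_GT ord_predK.
by case: ifP => h1; case: ifP => h2; rewrite ?(IH' _ h1) ?(IH' _ h2).
Qed.

Lemma take_step n (D : seq {set 'I_n}) t x : t < size D ->
  sched_update (take t.+1 D) x = block_update (nth set0 D t) (sched_update (take t D) x).
Proof. by move=> Ht; rewrite /sched_update (take_nth set0 Ht) foldl_rcons. Qed.

Lemma sched_E n (D : seq {set 'I_n}) (rho : 'I_n -> nat) x :
  (forall k, rho k < size D) ->
  (forall k t, t < size D -> (k \in nth set0 D t) = (rho k == t)) ->
  Eb (labr rho) x (sched_update D x).
Proof.
move=> Hs Hm.
pose y t := sched_update (take t D) x.
have Ha : forall t, t <= size D -> forall j, t <= rho j -> y t j = x j.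
  elim=> [|t IH] Ht j Hj; first by rewrite /y take0.
  rewrite /y take_step // ffunE Hm //.
  rewrite (_ : (rho j == t) = false); first exact: IH (ltnW Ht) j (ltnW Hj).
  by apply/negbTE; rewrite neq_ltn Hj orbT.
have Hb : forall j t, rho j < t -> t <= size D -> y t j = y (rho j).+1 j.
  move=> j; elim=> // t IH Hj Ht.
  case: (ltngtP (rho j) t) => [h||h].
  - rewrite /y take_step // ffunE Hm // (_ : (rho j == t) = false).
      exact: IH h (ltnW Ht).
    by apply/negbTE; rewrite neq_ltn h.
  - by move=> h; move: Hj; rewrite ltnS leqNgt h.
  - by rewrite h.
have HY : forall j, sched_update D x j = y (rho j).+1 j.
  by move=> j; rewrite -(Hb j (size D)) // /y take_size.
apply/forallP => j; apply/eqP.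
rewrite HY /y take_step // ffunE Hm // eqxx.
rewrite -/(y (rho j)) ffunE.
rewrite labr_LT labr_GT ord_predK (Ha (rho j) _ j) //; last exact: ltnW.
have Hy : forall i, y (rho j) i = if rho i < rho j then sched_update D x i else x i.
  move=> i; case: ifP => h; last by rewrite Ha //; [exact: ltnW | rewrite leqNgt h].
  by rewrite Hb //; exact: ltnW.
by rewrite !Hy.
Qed.


Definition rhoD n (D : seq {set 'I_n}) (k : 'I_n) : nat := find (fun B : {set 'I_n} => k \in B) D.

Lemma rhoD_props n (D : seq {set 'I_n}) : update_schedule D ->
  (forall k, rhoD D k < size D) /\
  (forall k t, t < size D -> (k \in nth set0 D t) = (rhoD D k == t)).
Proof.
case/andP=> uD /and3P[/eqP cov triv _].
have Hk : forall k, has (fun B : {set 'I_n} => k \in B) D.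
  move=> k; have : k \in cover [set:: D] by rewrite cov inE.
  case/bigcupP=> B; rewrite inE => BD kB; apply/hasP; by exists B.
split=> [k|k t Ht]; first by rewrite /rhoD -has_find.
have Hf : rhoD D k < size D by rewrite /rhoD -has_find.
have Hn := nth_find set0 (Hk k).
case: eqP => [<-//|ne]; apply/negbTE/negP => kt.
have nD : nth set0 D t != nth set0 D (rhoD D k).
  by rewrite nth_uniq //; apply/eqP => e; apply: ne.
move/trivIsetP: triv => /(_ _ _ _ _ nD).
rewrite !inE !mem_nth // => /(_ isT isT) dis.
by rewrite (disjointFr dis kt) in Hn.
Qed.

Lemma sched_labr n (D : seq {set 'I_n}) x : update_schedule D ->
  Eb (labr (rhoD D)) x (sched_update D x).
Proof. by case/rhoD_props => h1 h2; apply: sched_E. Qed.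

Lemma cyc n (f : 'I_n -> nat) (R : rel nat) : reflexive R -> transitive R ->
  (forall k, R (f k) (f (ordS k))) -> forall k, R (f (ordS k)) (f k).
Proof.
move=> Rr Rt H k.
have H2 : forall j t, R (f j) (f (rot j t)).
  move=> j; elim=> [|t IH]; first by rewrite rot0.
  by apply: Rt IH _; rewrite -ordS_rot.
have := H2 (ordS k) n.-1.
rewrite ordS_rot1 rot_rot add1n prednK ?rotn //; exact: ord_gt0 k.
Qed.

Definition valid n (L : {ffun 'I_n -> 'I_3}) : bool :=
  ~~ ([forall k, L k != GT] && [exists k, L k == LT]) &&
  ~~ ([forall k, L k != LT] && [exists k, L k == GT]).

Lemma valid_labr n (rho : 'I_n -> nat) : valid (labr rho).
Proof.
apply/andP; split; apply/negP => /andP[/forallP H /existsP[k Hk]].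
- have H' : forall k, rho k <= rho (ordS k).
    by move=> j; have := H j; rewrite labr_GT -leqNgt.
  have := cyc leqnn leq_trans H' k.
  by move: Hk; rewrite labr_LT => h; rewrite leqNgt h.
- have H' : forall k, rho (ordS k) <= rho k.
    by move=> j; have := H j; rewrite labr_LT -leqNgt.
  have := @cyc n rho geq leqnn (fun a b c h1 h2 => leq_trans h2 h1) H' k.
  by move: Hk; rewrite labr_GT => h; rewrite /= leqNgt h.
Qed.

Lemma foldl_skip n (s : seq {set 'I_n}) (y : config n) :
  foldl (fun y B => block_update B y) y [seq B <- s | B != set0] =
  foldl (fun y B => block_update B y) y s.
Proof.
elim: s y => //= B s IH y; case: eqP => [->|_] /=; last exact: IH.
rewrite IH; congr foldl; apply/ffunP => i; by rewrite ffunE inE.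
Qed.

Lemma exists_sched n (rho : 'I_n -> nat) :
  exists D, update_schedule D /\ forall x, Eb (labr rho) x (sched_update D x).
Proof.
pose N := (\max_k rho k).+1.
have HN : forall k, rho k < N by move=> k; rewrite ltnS; apply: leq_bigmax.
pose D0 := [seq [set k | rho k == t] | t <- iota 0 N].
exists [seq B <- D0 | B != set0]; split; last first.
  move=> x; rewrite /sched_update foldl_skip.
  apply: sched_E => [k|k t Ht]; first by rewrite size_map size_iota.
  move: Ht; rewrite size_map size_iota => Ht.
  rewrite (nth_map 0) ?size_iota // nth_iota // inE add0n //.
apply/andP; split.
  rewrite filter_map map_inj_in_uniq ?filter_uniq ?iota_uniq //.
  move=> t1 t2; rewrite !mem_filter /= => /andP[h1 _] /andP[h2 _] e.
  case/set0Pn: h1 => k; rewrite inE => /eqP e1.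
  by move: (e); move/setP/(_ k); rewrite !inE e1 eqxx => /esym/eqP.
apply/and3P; split.
- apply/eqP/setP => k; rewrite inE; apply/bigcupP; exists [set j | rho j == rho k].
    rewrite inE mem_filter; apply/andP; split.
      by apply/set0Pn; exists k; rewrite inE.
    by apply/mapP; exists (rho k); rewrite // mem_iota add0n HN.
  by rewrite inE.
- apply/trivIsetP => A B; rewrite !inE !mem_filter => /andP[_ /mapP[t1 _ ->]] /andP[_ /mapP[t2 _ ->]] ne.
  apply/pred0P => k /=; apply/negP => /andP[]; rewrite !inE => /eqP e1 /eqP e2.
  by move: ne; rewrite -e1 -e2 eqxx.
- by rewrite inE mem_filter eqxx.
Qed.


Lemma off_rot n (b : 'I_n) t : t < n -> (rot b t + n - b) %% n = t.
Proof.
move=> tn; apply: (@rot_inj _ b) => //; first exact: ltn_pmod (ord_gt0 b).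
by rewrite -rot_surj.
Qed.

Lemma cnt_le (f : nat -> bool) t : \sum_(s < t) f s <= t.
Proof.
rewrite -[X in _ <= X]card_ord -sum1_card; apply: leq_sum => i _; by case: (f i).
Qed.

Lemma cnt_ge (f : nat -> bool) t s : s < t -> f s -> 1 <= \sum_(i < t) f i.
Proof.
move=> st fs; rewrite (bigD1 (Ordinal st)) //= fs; exact: leq_addr.
Qed.

Lemma valid_rho n (L : {ffun 'I_n -> 'I_3}) : valid L -> exists rho : 'I_n -> nat, labr rho = L.
Proof.
move=> V.
case: (boolP [forall k, L k == EQ]) => [/forallP Ha | Hna].
  exists (fun _ => 0); apply/ffunP => k; rewrite ffunE ltnn eqxx; symmetry; apply/eqP/Ha.
have [k0 Hk0] : exists k, L k != EQ.
  by apply/existsP; rewrite -negb_forall.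
have [g Hg] : exists g, L g == GT.
  apply/existsP; move: V => /andP[V _]; apply: contraR V => nG; apply/andP; split.
  - by apply/forallP => k; apply/negP => h; case/negP: nG; apply/existsP; exists k.
  - apply/existsP; exists k0; move: Hk0; case: (I3_cases (L k0)) => e; rewrite e //= => _.
    by case/negP: nG; apply/existsP; exists k0; rewrite e.
have [l Hl] : exists l, L l == LT.
  apply/existsP; move: V => /andP[_ V]; apply: contraR V => nL; apply/andP; split.
  - by apply/forallP => k; apply/negP => h; case/negP: nL; apply/existsP; exists k.
  - apply/existsP; exists k0; move: Hk0; case: (I3_cases (L k0)) => e; rewrite e //= => _.
    by case/negP: nL; apply/existsP; exists k0; rewrite e.
pose b := ordS g.
pose cnt (c : 'I_3) t := \sum_(s < t) (L (rot b s) == c).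
pose h t := n * cnt LT t + n - cnt GT t.
exists (fun k => h ((k + n - b) %% n)).
have n0 : 0 < n := ord_gt0 g.
apply/ffunP => k; have [t tn ->] := rot_off b k.
rewrite ffunE ordS_rot off_rot //.
have cntS : forall c t, cnt c t.+1 = cnt c t + (L (rot b t) == c).
  by move=> c s; rewrite /cnt big_ord_recr.
have cG := cnt_le (fun s => L (rot b s) == GT) t.
case: (ltngtP t.+1 n) => [tn1|tn1|tn1].
- rewrite off_rot // /h !cntS.
  move: cG; rewrite -/(cnt GT t).
  case: (I3_cases (L (rot b t))) => -> /=; rewrite ?addn0 ?addn1 ?mulnS;
    move: (n * cnt LT t) (cnt GT t) => A c cG.
  + have : A + n - c < n + A + n - c by lia.
    by case: ltngtP.
  + by rewrite ltnn eqxx.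
  + have : A + n - c.+1 < A + n - c by lia.
    by case: ltngtP.
- by move: tn1; rewrite ltnS leqNgt tn.
-
  have eg : rot b t = g.
    by rewrite /b ordS_rot1 rot_rot add1n tn1 rotn.
  rewrite tn1 rotn addKn modnn eg (eqP Hg).
  have [tl tln el] := rot_off b l.
  have tl1 : tl < t.
    rewrite ltn_neqAle -ltnS tn1 tln andbT; apply/eqP => e.
    by move: Hl; rewrite el e eg (eqP Hg).
  have c1 : 1 <= cnt LT t by apply: (cnt_ge (f := fun s => L (rot b s) == LT) tl1); rewrite -el.
  rewrite /h /cnt !big_ord0 muln0 add0n subn0.
  have cG' : cnt GT t < n by rewrite -tn1 ltnS.
  move: c1 cG'; rewrite -/(cnt LT t) -/(cnt GT t).
  move: (cnt LT t) (cnt GT t) => a c c1 cG'.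
  have : n < n * a + n - c.
    have : n <= n * a by rewrite -{1}(muln1 n) leq_mul2l c1 orbT.
    move: (n * a) => A; lia.
  by case: ltngtP.
Qed.


Definition Phi n (L : {ffun 'I_n -> 'I_3}) : {ffun config n -> config n} :=
  [ffun x => odflt x [pick y | Eb L x y]].

Lemma Phi_E n (rho : 'I_n -> nat) x y : Eb (labr rho) x y -> Phi (labr rho) x = y.
Proof.
move=> H; rewrite ffunE; case: pickP => [y' H'|H'] /=; first exact: E_uniq H' H.
by move: (H' y); rewrite H.
Qed.

Lemma Phi_valid n (L : {ffun 'I_n -> 'I_3}) x : valid L -> Eb L x (Phi L x).
Proof.
case/valid_rho => rho <-; have [D [_ HD]] := exists_sched rho.
by rewrite (Phi_E (HD x)).
Qed.

Lemma Phi_uniq n (L : {ffun 'I_n -> 'I_3}) x y : valid L -> Eb L x y -> Phi L x = y.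
Proof. by case/valid_rho => rho <-; apply: Phi_E. Qed.

Definition Gr n (h : {ffun config n -> config n}) : {set config n * config n} :=
  [set (x, h x) | x : config n].

Lemma Gr_inj n : injective (@Gr n).
Proof.
move=> h h' e; apply/ffunP => x.
have : (x, h x) \in Gr h by apply/imsetP; exists x.
by rewrite e => /imsetP[x' _ [-> ->]].
Qed.

Lemma dyn_set n : dynamics_set n = [set Gr (Phi L) | L in [set L | valid L]].
Proof.
apply/setP => G; rewrite inE; apply/asboolP/imsetP.
- case=> D [sD <-]; exists (labr (rhoD D)); first by rewrite inE valid_labr.
  rewrite /dynamics /Gr; apply: eq_imset => x.
  by rewrite (Phi_E (sched_labr x sD)).
- case=> L; rewrite inE => vL ->.
  have [rho eL] := valid_rho vL.
  have [D [sD HD]] := exists_sched rho.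
  exists D; split => //; rewrite /dynamics /Gr; apply: eq_imset => x.
  by rewrite -eL (Phi_E (HD x)).
Qed.

Lemma card_dyn n : #|dynamics_set n| = #|[set Phi L | L in [set L : {ffun 'I_n -> 'I_3} | valid L]]|.
Proof.
rewrite dyn_set (imset_comp (@Gr n) (@Phi n)).
exact: (card_imset _ (@Gr_inj n)).
Qed.


Lemma rot_ne n (k : 'I_n) t s : t < n -> s < n -> t != s -> rot k t != rot k s.
Proof. by move=> tn sn ts; rewrite rot_eq !modn_small. Qed.

Lemma rot_Sp n (k : 'I_n) t : ordS (rot k t) = rot k t.+1.
Proof. exact: ordS_rot. Qed.

Definition e1 n (c : 'I_n) : config n := [ffun j => j == c].

Lemma T1 n (L : {ffun 'I_n -> 'I_3}) k : 1 < n -> valid L ->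
  Phi L (e1 (ordS k)) k = (L k != GT).
Proof.
move=> n1 vL; have E := EbP (Phi_valid (e1 (ordS k)) vL).
set y := Phi L (e1 (ordS k)) in E *.
have kS : (k == ordS k) = false.
  by apply/negbTE; rewrite eq_sym ordS_rot1; apply: rot_neq; exact: n1.
rewrite E !ffunE kS eqxx /r162 /= orbT /=.
by case: ifP => // /eqP G; rewrite E ordSK G /= !ffunE kS /= eqxx.
Qed.

Definition Zc n (c : 'I_n) : config n := [ffun j => j != c].

Lemma T2 n (L : {ffun 'I_n -> 'I_3}) i t : 2 < n -> valid L ->
  L i != GT -> 0 < t -> t <= n - 2 -> L (rot i t) != GT ->
  (forall s, 0 < s < t -> L (rot i s) == GT) ->
  Phi L (Zc i) (rot i 1) = (L i == LT).
Proof.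
move=> n3 vL Li t0 tn Lt Hs.
have E := EbP (Phi_valid (Zc i) vL); set y := Phi L (Zc i) in E *.
have Zr : forall s, 0 < s < n -> Zc i (rot i s) = true.
  by move=> s hs; rewrite ffunE rot_neq.
have Zi : Zc i i = false by rewrite ffunE eqxx.
have yi : y i = true.
  rewrite E Zi /r162 /= orbT (negbTE Li) ordS_rot1 Zr //.
  by apply/andP; split => //; lia.
have Hc : forall d, d + 2 <= t -> y (rot i (t - d)) = true.
  elim=> [|d IH] hd.
  - rewrite subn0 E Zr; last by apply/andP; split; lia.
    have -> : t = (t.-1).+1 by lia.
    rewrite ord_pred_rot ordS_rot (prednK t0) (negbTE Lt).
    have h1 : L (rot i t.-1) == GT by apply: Hs; apply/andP; split; lia.
    rewrite (_ : L (rot i t.-1) == LT = false); last by rewrite (eqP h1).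
    by rewrite !Zr //; apply/andP; split; lia.
  - have -> : t - d.+1 = (t - d.+2).+1 by lia.
    rewrite E Zr; last by apply/andP; split; lia.
    rewrite ord_pred_rot ordS_rot.
    have h1 : L (rot i (t - d.+2)) == GT by apply: Hs; apply/andP; split; lia.
    have h2 : L (rot i (t - d.+2).+1) == GT by apply: Hs; apply/andP; split; lia.
    rewrite (_ : L (rot i (t - d.+2)) == LT = false); last by rewrite (eqP h1).
    rewrite h2 Zr; last by apply/andP; split; lia.
    have -> : (t - d.+2).+2 = t - d by lia.
    by rewrite IH //; lia.
rewrite E ord_pred_rot rot0 ordS_rot Zr //; last by apply/andP; split; lia.
have -> : (if L (rot i 1) == GT then y (rot i 2) else Zc i (rot i 2)) = true.
  case: ifP => h.
  - have t2 : 1 < t.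
      rewrite ltn_neqAle t0 andbT; apply/eqP => e; move: Lt; by rewrite -e h.
    by have := Hc (t - 2); rewrite subKn // => ->; lia.
  - by rewrite Zr //; apply/andP; split; lia.
by rewrite yi Zi /r162 /= orbF andbT; case: ifP.
Qed.


Definition cE n (j : 'I_n) : {ffun 'I_n -> 'I_3} :=
  [ffun k => if k == j then LT else if k == ordS j then EQ else GT].
Definition cL n (j : 'I_n) : {ffun 'I_n -> 'I_3} :=
  [ffun k => if k == j then LT else if k == ordS j then LT else GT].

Lemma rot_other n (j : 'I_n) s : 1 < s < n -> (rot j s == j) = false /\ (rot j s == ordS j) = false.
Proof.
move=> /andP[s1 sn]; split; apply/negbTE.
- by apply: rot_neq; rewrite sn andbT; lia.
- by rewrite ordS_rot1 rot_ne //; lia.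
Qed.

Lemma cE_valid n (j : 'I_n) : 2 < n -> valid (cE j).
Proof.
move=> n3; have [h1 h2] := @rot_other n j 2 (n3 : 1 < 2 < n).
apply/andP; split; apply/negP => /andP[/forallP H _].
- by have := H (rot j 2); rewrite ffunE h1 h2.
- by have := H j; rewrite ffunE eqxx.
Qed.

Lemma cL_valid n (j : 'I_n) : 2 < n -> valid (cL j).
Proof.
move=> n3; have [h1 h2] := @rot_other n j 2 (n3 : 1 < 2 < n).
apply/andP; split; apply/negP => /andP[/forallP H _].
- by have := H (rot j 2); rewrite ffunE h1 h2.
- by have := H j; rewrite ffunE eqxx.
Qed.

Lemma collision n (j : 'I_n) : 2 < n -> Phi (cE j) = Phi (cL j).
Proof.
move=> n3; apply/ffunP => x.
have E := EbP (Phi_valid x (cL_valid j n3)); set y := Phi (cL j) x in E *.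
apply: Phi_uniq; first exact: cE_valid.
have jS : (j == ordS j) = false.
  by apply/negbTE; rewrite eq_sym ordS_rot1; apply: rot_neq; apply/andP; split =>//; lia.
have Sj : (ordS j == j) = false by rewrite eq_sym jS.
have SSj : ordS (ordS j) = rot j 2 by rewrite [X in ordS X]ordS_rot1 ordS_rot.
have [r2a r2b] := @rot_other n j 2 (n3 : 1 < 2 < n).
have Hch : forall d, d + 3 <= n -> y (rot j (n - d)) ==> y j.
  elim=> [|d IH] hd; first by rewrite subn0 rotn implybb.
  have [ha hb] := @rot_other n j (n - d.+1) (ltac:(apply/andP; split; lia)).
  rewrite E [cL j (rot j _)]ffunE ha hb /= ordS_rot.
  have -> : (n - d.+1).+1 = n - d by lia.
  have := IH ltac:(lia); rewrite /r162.
  by move=> h; apply/implyP => /andP[_ h']; exact: (implyP h h').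
have yj : y j ==> x (ordS j).
  rewrite E [cL j j]ffunE eqxx /= /r162.
  by apply/implyP => /andP[].
have yS : y (ordS j) = r162 (y j) (x (ordS j)) (x (rot j 2)).
  by rewrite E ordSK !ffunE eqxx /= Sj eqxx /= SSj.
apply/forallP => k; apply/eqP.
case: (eqVneq (ord_pred k) (ordS j)) => hk.
- have ek : k = rot j 2 by rewrite -SSj -hk ord_predK.
  rewrite {1}E hk !ffunE eqxx Sj ek r2a r2b /= ordS_rot.
  have ch : y (rot j 3) ==> y j.
    case: (ltngtP 3 n) => h3; last first.
      have -> : rot j 3 = j.
        by rewrite -[j in RHS]rot0 ; apply/eqP; rewrite rot_eq -h3 modnn mod0n.
      exact: implybb.
    + by move: h3; rewrite ltnNge => /negP; case; exact: n3.
    + have := Hch (n - 3); rewrite subKn ?(ltnW h3) //.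
      by apply; rewrite subnK // (ltnW h3).
  rewrite yS; move: ch yj; rewrite /r162.
  by case: (y (rot j 3)); case: (y j); case: (x (ordS j)); case: (x (rot j 2)).
- rewrite {1}E !ffunE.
  have e1 : (if ord_pred k == j then LT else if ord_pred k == ordS j then LT else GT) =
            (if ord_pred k == j then LT else if ord_pred k == ordS j then EQ else GT).
    by rewrite (negbTE hk).
  by rewrite e1; case: (k == j); case: (k == ordS j).
Qed.


Definition C2 n := [set cE j | j : 'I_n].

Lemma classify n (i k : 'I_n) : 1 < n ->
  [\/ k = i, k = ord_pred i | exists2 t, 0 < t <= n - 2 & k = rot i t].
Proof.
move=> n1; have [t tn ->] := rot_off i k.
case: t tn => [|t] tn; first by apply: Or31; rewrite rot0.
case: (eqVneq t.+1 n.-1) => e.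
  by apply: Or32; rewrite ord_pred_rotn e.
apply: Or33; exists t.+1 => //; apply/andP; split => //.
move/eqP: e; lia.
Qed.

Lemma arith_t n t : 2 < n -> 0 < t <= n - 2 -> [/\ t < n, n.-1 < n, t != n.-1 & 0 < t < n].
Proof. move=> h1 h2; split; try (apply/andP; split); try (apply/eqP); lia. Qed.

Lemma arith_1 n : 2 < n -> (0 < 1 <= n - 2) /\ (0 < n.-1 < n).
Proof. move=> h; split; apply/andP; split; lia. Qed.

Lemma nGT (c : 'I_3) : c != GT -> c = LT \/ c = EQ.
Proof. by case: (I3_cases c) => ->; auto. Qed.

Lemma inj_main n (L L' : {ffun 'I_n -> 'I_3}) : 2 < n -> valid L -> valid L' ->
  L \notin C2 n -> L' \notin C2 n -> Phi L = Phi L' -> L = L'.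
Proof.
move=> n3 vL vL' nC nC' eP.
have n1 : 1 < n by apply: ltnW.
have HG : forall k, (L k == GT) = (L' k == GT).
  by move=> k; apply: negb_inj; rewrite -(T1 k n1 vL) -(T1 k n1 vL') eP.
apply/ffunP => i; apply/eqP; apply: contraT => ne.
have Li : L i != GT.
  by apply: contra ne => h; move: (h); rewrite HG => h'; rewrite (eqP h) (eqP h').
have L'i : L' i != GT by rewrite -HG.
have key : (L i == LT) = (L' i == LT) -> False.
  move=> e; case/negP: ne.
  by case: (nGT Li) e => ->; case: (nGT L'i) => -> .
case: (boolP [exists t : 'I_n, (0 < t <= n - 2) && (L (rot i t) != GT)]) => [Ex|nEx].
- have Ex' : exists t, [&& 0 < t, t <= n - 2 & L (rot i t) != GT].
    by case/existsP: Ex => t /andP[/andP[h1 h2] h3]; exists t; rewrite h1 h2 h3.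
  case: (ex_minnP Ex') => m /and3P[m0 mn Lm] mmin.
  have Hs : forall s, 0 < s < m -> L (rot i s) == GT.
    move=> s /andP[s0 sm]; apply: contraT => h.
    have := mmin s; rewrite s0 h andbT (leq_trans (ltnW sm) mn) /= => /(_ isT).
    by rewrite leqNgt sm.
  exfalso; apply: key.
  rewrite -(T2 n3 vL Li m0 mn Lm Hs).
  rewrite -(T2 n3 vL' L'i m0 mn (ltac:(by rewrite -HG)) (fun s h => ltac:(by rewrite -HG; apply: Hs))).
  by rewrite eP.
- have AG : forall t, 0 < t <= n - 2 -> L (rot i t) == GT.
    move=> t ht; apply: contraT => h; case/existsP: nEx.
    have [tn _ _ _] := arith_t n3 ht.
    by exists (Ordinal tn); rewrite /= ht h.
  have AG' : forall t, 0 < t <= n - 2 -> L' (rot i t) == GT by move=> t h; rewrite -HG AG.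
  have [r1 rp] := arith_1 n3.
  have LLT : forall M : {ffun 'I_n -> 'I_3}, valid M -> M \notin C2 n ->
      M i != GT -> (forall t, 0 < t <= n - 2 -> M (rot i t) == GT) -> M i == LT.
    move=> M vM nCM Mi AM; case: (nGT Mi) => MiE; first by rewrite MiE.
    exfalso.
    have MpG : M (ord_pred i) != GT.
      apply/negP => MpG; move: vM; rewrite /valid => /andP[_ /negP]; apply.
      apply/andP; split; last by apply/existsP; exists (rot i 1); apply: AM.
      apply/forallP => k; case: (classify i k n1) => [->|->|[t ht ->]].
      - by rewrite MiE.
      - by rewrite (eqP MpG).
      - by rewrite (eqP (AM t ht)).
    case: (nGT MpG) => MpE.
    + case/negP: nCM; apply/imsetP; exists (ord_pred i) => //.
      have pi : (i == ord_pred i) = false.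
        by apply/negbTE; rewrite eq_sym ord_pred_rotn; apply: rot_neq.
      apply/ffunP => k; rewrite ffunE ord_predK.
      case: (classify i k n1) => [->|->|[t ht ->]].
      * by rewrite pi eqxx.
      * by rewrite eqxx.
      * have [h1 h2] : (rot i t == ord_pred i) = false /\ (rot i t == i) = false.
          have [a1 a2 a3 a4] := arith_t n3 ht.
          split; apply/negbTE.
          - by rewrite ord_pred_rotn rot_ne.
          - by apply: rot_neq.
        by rewrite h1 h2 (eqP (AM t ht)).
    + move: vM; rewrite /valid => /andP[_ /negP]; apply.
      apply/andP; split; last by apply/existsP; exists (rot i 1); apply: AM.
      apply/forallP => k; case: (classify i k n1) => [->|->|[t ht ->]].
      - by rewrite MiE.
      - by rewrite MpE.
      - by rewrite (eqP (AM t ht)).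
  exfalso; apply: key; by rewrite (LLT L vL nC Li AG) (LLT L' vL' nC' L'i AG').
Qed.


Lemma card_nota n (a : 'I_3) :
  #|[set L : {ffun 'I_n -> 'I_3} | [forall k, L k != a]]| = 2 ^ n.
Proof.
rewrite (_ : 2 ^ n = #|predC1 a| ^ #|'I_n|); last by rewrite cardC1 !card_ord.
rewrite -card_ffun_on; apply: eq_card => L; rewrite inE.
apply/forallP/ffun_onP => H k; by have := H k.
Qed.

Lemma cardA n (a b : 'I_3) : (forall c : 'I_3, c != a -> c != EQ -> c == b) ->
  a != EQ -> b != EQ ->
  #|[set L : {ffun 'I_n -> 'I_3} | [forall k, L k != a] && [exists k, L k == b]]| = 2 ^ n - 1.
Proof.
move=> H3 aE bE.
pose S := [set L : {ffun 'I_n -> 'I_3} | [forall k, L k != a]].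
have -> : [set L : {ffun 'I_n -> 'I_3} | [forall k, L k != a] && [exists k, L k == b]] =
          S :\ [ffun=> EQ].
  apply/setP => L; rewrite !inE; case: (boolP [forall k, L k != a]) => Ha; rewrite ?andbF ?andbT //=.
  apply/existsP/idP.
  - case=> k /eqP Lk; apply/eqP => e; move: bE; by rewrite -Lk e ffunE eqxx.
  - move=> nE; have [k Hk] : exists k, L k != EQ.
      apply/existsP; apply: contraR nE; rewrite negb_exists => /forallP H.
      by apply/eqP/ffunP => k; rewrite ffunE; move: (H k); rewrite negbK => /eqP.
    exists k; apply: H3 => //; exact: (forallP Ha k).
have := cardsD1 [ffun=> EQ] S; rewrite card_nota.
have -> : [ffun=> EQ] \in S.
  by rewrite inE; apply/forallP => k; rewrite ffunE eq_sym.
move=> ->; by rewrite add1n subn1.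
Qed.

Definition Vs n := [set L : {ffun 'I_n -> 'I_3} | valid L].

Lemma card_V n : 0 < n -> #|Vs n| + 2 ^ n.+1 = 3 ^ n + 2.
Proof.
move=> n0.
pose A := [set L : {ffun 'I_n -> 'I_3} | [forall k, L k != GT] && [exists k, L k == LT]].
pose B := [set L : {ffun 'I_n -> 'I_3} | [forall k, L k != LT] && [exists k, L k == GT]].
have eV : Vs n = ~: (A :|: B) by apply/setP => L; rewrite !inE /valid negb_or.
have hA : #|A| = 2 ^ n - 1 by apply: cardA => // c; case: (I3_cases c) => ->.
have hB : #|B| = 2 ^ n - 1 by apply: cardA => // c; case: (I3_cases c) => ->.
have hAB : A :&: B = set0.
  apply/setP => L; rewrite !inE; apply/negP => /andP[/andP[_ /existsP[k Hk]] /andP[/forallP H _]].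
  by move: (H k); rewrite Hk.
have := cardsC (A :|: B); rewrite -eV card_ffun !card_ord cardsU hAB cards0 subn0 hA hB.
have : 0 < 2 ^ n by rewrite expn_gt0.
rewrite expnS; move: (2 ^ n) (#|Vs n|) => p v; lia.
Qed.

Import GRing.Theory Num.Theory.

Lemma cL_notC2 n (j : 'I_n) : 1 < n -> cL j \notin C2 n.
Proof.
move=> n1; apply/imsetP => -[j' _ e].
have Sj : (ordS j' == j') = false.
  by apply/negbTE; rewrite ordS_rot1; apply: rot_neq; rewrite /= n1.
have := congr1 (fun f : {ffun 'I_n -> 'I_3} => f (ordS j')) e; rewrite !ffunE Sj eqxx.
by case: (_ == j); case: (_ == ordS j).
Qed.

Lemma card_C2 n : #|C2 n| = n.
Proof.
rewrite card_imset ?card_ord // => j j' e.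
have := congr1 (fun f : {ffun 'I_n -> 'I_3} => f j) e; rewrite !ffunE eqxx.
by case: eqP => // _; case: (j == ordS j').
Qed.

Lemma card_PhiV n : 2 < n -> #|[set Phi L | L in Vs n]| = #|Vs n| - n.
Proof.
move=> n3; have n1 : 1 < n by apply: ltnW.
have sub : C2 n \subset Vs n.
  by apply/subsetP => L /imsetP[j _ ->]; rewrite inE cE_valid.
have -> : [set Phi L | L in Vs n] = [set Phi L | L in Vs n :\: C2 n].
  apply/eqP; rewrite eqEsubset; apply/andP; split; apply/subsetP => h /imsetP[L HL ->].
  - case: (boolP (L \in C2 n)) => LC.
      case/imsetP: LC => j _ e; rewrite e (collision j n3).
      by apply/imsetP; exists (cL j) => //; rewrite !inE cL_notC2 // cL_valid.
    by apply/imsetP; exists L => //; rewrite in_setD LC HL.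
  - by apply/imsetP; exists L => //; move: HL; rewrite !inE => /andP[].
rewrite card_in_imset.
  by rewrite cardsD (setIidPr sub) card_C2.
move=> L L'; rewrite !inE => /andP[nC vL] /andP[nC' vL'] e.
exact: inj_main n3 vL vL' nC nC' e.
Qed.

Theorem mainTheorem8 (n : nat) : 3 <= n ->
  mu162 n = (((3 ^ n)%:R - (2 ^ n.+1)%:R - n%:R + 2) /
             ((3 ^ n)%:R - (2 ^ n.+1)%:R + 2))%R.
Proof.
move=> n3.
have hV := card_V (ltnW (ltnW n3)).
have nV : n <= #|Vs n|.
  rewrite -[X in X <= _]card_C2; apply: subset_leq_card.
  by apply/subsetP => L /imsetP[j _ ->]; rewrite inE cE_valid.
rewrite /mu162 card_dyn -/(Vs n) card_PhiV // natrB //.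
congr (_ / _)%R.
have : ((#|Vs n|)%:R + (2 ^ n.+1)%:R = (3 ^ n)%:R + 2 :> rat)%R.
  by rewrite -!natrD hV.
move=> h; lra.
Qed.
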